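(* Let $v\in V$, $e\in E_v$, and let $z\in\mathcal B_v$ be acceptable (i.e. $C_v(z)=z$) with $z(e)<b(e)$. The following are equivalent: (i) $e$ is interesting for $v$ under $z$; (ii) there is an acceptable $\tilde z\in\mathcal B_v$ such that $\tilde z\succ_v z$ and $\tilde z(e)>z(e)$; (iii) $C_v(z+\mathbf 1^e)\ne z$; (iv) $C_v(z+\mathbf 1^e)$ is either (a) $z+\mathbf 1^e$, or (b) $z+\mathbf 1^e-\mathbf 1^{e'}$ for some $e'\in E_v\setminus\{e\}$.
   Context: Let $G=(V,E)$ be a finite bipartite graph and $b\in\mathbb Z_+^E$ capacities. For $v\in V$, $E_v$ is the set of edges at $v$, $\mathcal B_v=\{z\in\mathbb Z_+^{E_v}: z(e)\le b(e)\ \forall e\in E_v\}$, $\mathbf 1^e$ the unit vector of $e$ in $\mathbb Z^{E_v}$, $|z|=\sum_e|z(e)|$, and $\wedge,\vee$ componentwise min and max. $C_v:\mathcal B_v\to\mathcal B_v$ is a choice function with $C_v(z)\le z$ such that for all $z,z'\in\mathcal B_v$: (A1) if $z\ge z'\ge C_v(z)$ then $C_v(z')=C_v(z)$; (A2) if $z\ge z'$ then $C_v(z)\wedge z'\le C_v(z')$; (A3) if $z\ge z'$ then $|C_v(z)|\ge|C_v(z')|$. $z$ is acceptable if $C_v(z)=z$; for distinct acceptable $z,z'$, $z'\prec_v z$ (equivalently $z\succ_v z'$) means $C_v(z\vee z')=z$. An edge $e\in E_v$ is interesting for $v$ under acceptable $z$ if there is $z'\in\mathcal B_v$ with $z'(e)>z(e)$,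 $z'(e')=z(e')$ for all $e'\ne e$, and $C_v(z')(e)>z(e)$. *)

(* Defs.v *)
(* Local (single-vertex) model of the setting:
   the finite type Ev plays the role of E_v, the set of edges at a vertex v. *)
From mathcomp Require Import all_boot all_order all_algebra.
Set Implicit Arguments. Unset Strict Implicit. Unset Printing Implicit Defensive.

Definition vec (Ev : finType) := {ffun Ev -> nat}.

Definition vle (Ev : finType) (z z' : vec Ev) : Prop := forall e, z e <= z' e.

Definition inB (Ev : finType) (b : Ev -> nat) (z : vec Ev) : Prop := vle z [ffun e => b e].

Definition unitv (Ev : finType) (e : Ev) : vec Ev := [ffun x => nat_of_bool (x == e)].

Definition vadd (Ev : finType) (z z' : vec Ev) : vec Ev := [ffun x => z x + z' x].
Definition vmeet (Ev : finType) (z z' : vec Ev) : vec Ev := [ffun x => minn (z x) (z' x)].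
Definition vjoin (Ev : finType) (z z' : vec Ev) : vec Ev := [ffun x => maxn (z x) (z' x)].

Definition vnorm (Ev : finType) (z : vec Ev) : nat := \sum_(e : Ev) z e.

(* C_v : B_v -> B_v is a choice function satisfying (A1)-(A3);
   C is given as a total function, constrained only on B_v. *)
Definition choice_fun (Ev : finType) (b : Ev -> nat) (C : vec Ev -> vec Ev) : Prop :=
  [/\ (forall z, inB b z -> vle (C z) z),
      (* (A1) *)
      (forall z z', inB b z -> inB b z' -> vle z' z -> vle (C z) z' -> C z' = C z),
      (* (A2) *)
      (forall z z', inB b z -> inB b z' -> vle z' z -> vle (vmeet (C z) z') (C z')) &
      (* (A3) *)
      (forall z z', inB b z -> inB b z' -> vle z' z -> vnorm (C z') <= vnorm (C z))].

Definition acceptable (Ev : finType) (C : vec Ev -> vec Ev) (z : vec Ev) : Prop := C z = z.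

Definition succv (Ev : finType) (b : Ev -> nat) (C : vec Ev -> vec Ev) (z z' : vec Ev) : Prop :=
  [/\ inB b z /\ inB b z', acceptable C z, acceptable C z', z <> z' & C (vjoin z z') = z].

Definition interesting (Ev : finType) (b : Ev -> nat) (C : vec Ev -> vec Ev)
    (z : vec Ev) (e : Ev) : Prop :=
  exists z' : vec Ev, [/\ inB b z', z e < z' e, (forall e', e' != e -> z' e' = z e')
                        & z e < C z' e].

(* Main.v *)
Require Import Defs.
From mathcomp Require Import all_boot all_order all_algebra.
From mathcomp Require Import zify.

Theorem lemma3p1 (Ev : finType) (b : Ev -> nat) (C : vec Ev -> vec Ev)
    (HC : choice_fun b C) (z : vec Ev) (e : Ev)
    (Hz : inB b z) (Hacc : acceptable C z) (Hzb : z e < b e) :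
  [<-> interesting b C z e;
       exists zt : vec Ev, [/\ inB b zt, acceptable C zt, succv b C zt z & z e < zt e];
       C (vadd z (unitv e)) <> z;
       C (vadd z (unitv e)) = vadd z (unitv e) \/
       exists2 e' : Ev, e' != e &
         forall x : Ev, (C (vadd z (unitv e)) x : int)
                        = ((z x)%:Z + (unitv e x)%:Z - (unitv e' x)%:Z)%R].
Proof.
case: HC => HCle HA1 HA2 HA3.
set w := vadd z (unitv e).
have wE : forall x, w x = z x + (x == e) by move=> x; rewrite /w /vadd /unitv !ffunE.
have Bw : inB b w.
  move=> x; rewrite wE ffunE; have := Hz x; rewrite ffunE.
  case: eqP => [->|_] /=; lia.
have zw : vle z w by move=> x; rewrite wE leq_addr.
have key : C w <> z -> C w e = (z e).+1.
  move=> H; have := HCle w Bw e; rewrite wE eqxx /= addn1.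
  case: (ltnP (z e) (C w e)) => h1 h2; first lia.
  exfalso; apply: H.
  have le : vle (C w) z.
    move=> x; case: (eqVneq x e) => [->//|ne].
    by have := HCle w Bw x; rewrite wE (negbTE ne) addn0.
  by rewrite -(HA1 w z Bw Hz zw le) Hacc.
tfae.
-
  case=> z' [Bz' lt1 eq1 lt2].
  have zz' : vle z z'.
    move=> x; case: (eqVneq x e) => [->|ne]; first exact: ltnW.
    by rewrite eq1.
  set u := C z'.
  have uz' := HCle z' Bz'.
  have Bu : inB b u by move=> x; apply: leq_trans (uz' x) (Bz' x).
  have Bj : inB b (vjoin u z).
    move=> x; have := Bu x; have := Hz x; rewrite /vjoin !ffunE; lia.
  have jz' : vle (vjoin u z) z'.
    move=> x; rewrite /vjoin !ffunE geq_max; apply/andP; split; [exact: uz' | exact: zz'].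
  have uj : vle u (vjoin u z) by move=> x; rewrite /vjoin ffunE leq_maxl.
  have Cj : C (vjoin u z) = u by apply: HA1.
  have Cu : C u = u.
    apply: HA1 => //; exact: (fun x => leqnn _).
  exists u; split => //; split => //.
  by move=> E; move: lt2; rewrite -/u E ltnn.
-
  case=> zt [Bzt Azt [_ _ _ _ Cj] lt] H.
  have Bj : inB b (vjoin zt z).
    move=> x; have := Bzt x; have := Hz x; rewrite /vjoin !ffunE; lia.
  have wj : vle w (vjoin zt z).
    move=> x; rewrite wE /vjoin ffunE; case: (eqVneq x e) => [->|ne] /=.
      by rewrite addn1 (leq_trans lt) // leq_maxl.
    by rewrite addn0 leq_maxr.
  have := HA2 _ _ Bj Bw wj e; rewrite Cj H /vmeet /vjoin /w /vadd /unitv !ffunE eqxx /=; lia.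

-
  move=> H; have hy := key H.
  case: (eqVneq (C w) w) => [->|ne]; [by left | right].
  have [e' ne'] : exists e', C w e' != w e'.
    apply/existsP; apply: contraNT ne => /existsPn h; apply/eqP/ffunP => x.
    exact/eqP/negPn/(h x).
  have yw := HCle w Bw.
  have n1 : vnorm z <= vnorm (C w) by rewrite -{1}Hacc; apply: HA3.
  have n2 : vnorm w = (vnorm z).+1.
    rewrite /vnorm (eq_bigr _ (fun x _ => wE x)).  
    rewrite big_split /= -addn1; congr (_ + _); rewrite (bigD1 e) //= eqxx big1 ?addn0 //.
    by move=> x /negbTE ->.
  have n3 : vnorm w = vnorm (C w) + \sum_x (w x - C w x).
    rewrite /vnorm -big_split /=; apply: eq_bigr => x _; rewrite subnKC //.
  have n4 : \sum_x (w x - C w x) <= 1 by lia.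
  move: n4; rewrite (bigD1 e') //=.
  have d1 : 0 < w e' - C w e' by move: ne'; have := yw e'; lia.
  move=> n4.
  have rest : \sum_(i | i != e') (w i - C w i) == 0 by lia.
  move: rest; rewrite sum_nat_eq0 => /forallP rest.
  have ee' : e' != e.
    apply: contraNneq ne' => ->; rewrite hy wE eqxx addn1 //.
  exists e' => // x; rewrite /unitv !ffunE.
  case: (eqVneq x e') => [->|nx].
    rewrite (negbTE ee') /=; move: n4 d1 (yw e'); rewrite wE (negbTE ee'); lia.
  have := rest x; rewrite nx /= => /eqP; have := yw x; rewrite wE.
  case: (x == e) => /=; lia.
-
  move=> H; exists w; split => //.
  + by rewrite wE eqxx addn1.
  + by move=> x /negbTE nx; rewrite wE nx addn0.
  + case: H => [->|[e' ne' h]]; first by rewrite wE eqxx addn1.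
    have := h e; rewrite /unitv !ffunE eqxx eq_sym (negbTE ne') /=; lia.
Qed.
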